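(* Let $n\ge 2$ and sample $\mathbf C$ from the ensemble $\mathcal{R}_n$ described in the context. Then: (1) $\mathbf C$ is a symplectic matrix, i.e. $(\mathbf C\mathbf v)\odot(\mathbf C\mathbf w)=\mathbf v\odot\mathbf w$ for all $\mathbf v,\mathbf w\in\mathbb{Z}_2^{2n}$. (2) Let $\mathbf v_1,\dots,\mathbf v_{n-1}\in\mathbb{Z}_2^{2n}$ be a uniformly random basis of an $(n-1)$-dimensional isotropic subspace $V$, where $V$ is uniformly random subject to being symplectically orthogonal to $\mathbf f_1$ (sampled independently of $\mathbf C$), and let $\mathbf w_i:=\mathbf C\mathbf v_i$. Then the distribution of $(\mathbf w_1,\dots,\mathbf w_{n-1})$ is within total variation distance $\mathrm{negl}(n)$ of a uniformly random basis of a uniformly random $(n-1)$-dimensional isotropic subspace of $\mathbb{Z}_2^{2n}$.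
   Context: Symplectic inner product on $\mathbb{Z}_2^{2n}$: $(\mathbf a,\mathbf b)\odot(\mathbf a',\mathbf b')=\mathbf a\cdot\mathbf b'+\mathbf a'\cdot\mathbf b \pmod 2$ for $\mathbf a,\mathbf b,\mathbf a',\mathbf b'\in\mathbb{Z}_2^n$. A subspace is isotropic if every two of its vectors are symplectically orthogonal. The standard symplectic basis is $\mathbf e_1,\dots,\mathbf e_n,\mathbf f_1,\dots,\mathbf f_n$, where $\mathbf e_i$ has a single $1$ in position $i$ and $\mathbf f_i$ has a single $1$ in position $n+i$. The ensemble $\mathcal{R}_n$ (random symplectic hyperplane rotation): sample $\mathbf r\sim\mathbb{Z}_2^{2n}$ uniformly. Let $k$ be the smallest index $k\ge1$ with $r_{n+k}=1$; if no such index exists, output $\mathbf C=\mathbf I$. Otherwise let $\mathbf r'$ equal $\mathbf r$ with entries $n+1$ and $n+k$ swapped. Let $\mathbf C_0$ be the linear map with $\mathbf e_1\mapsto\mathbf e_1$, $\mathbf f_1\mapsto\mathbf r'$, $\mathbf e_j\mapsto\mathbf e_j+(\mathbf r'\odot\mathbf e_j)\mathbf e_1$ and $\mathbf f_j\mapsto\mathbf f_j+(\mathbf r'\odot\mathbf f_j)\mathbf e_1$ for $j=2,\dots,n$. Let $\mathbf\Pi$ be the matrix swapping $\mathbf e_1\leftrightarrow\mathbf e_k$ and $\mathbf f_1\leftrightarrow\mathbf f_k$ and fixing all other $\mathbf e_j,\mathbf f_j$. Output $\mathbf C:=\mathbf\Pi\mathbf C_0$ (so $\mathbf C\mathbf f_1=\mathbf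 r$). *)

(* Defs.v *)
(* Vectors of Z_2^{2n} are row vectors 'rV['F_2]_(n+n);
   coordinate (lshift n i) is the "a"-part entry i (position i+1 in the paper),
   coordinate (rshift n i) is the "b"-part entry i (position n+i+1). *)
From HB Require Import structures.
From mathcomp Require Import all_boot all_order all_algebra.
Set Implicit Arguments. Unset Strict Implicit. Unset Printing Implicit Defensive.
Import Order.TTheory GRing.Theory Num.Theory.
Local Open Scope ring_scope.

Notation vec n := 'rV['F_2]_(n + n).

Definition e_ {n} (i : 'I_n) : vec n := delta_mx 0 (lshift n i).
Definition f_ {n} (i : 'I_n) : vec n := delta_mx 0 (rshift n i).

Definition sympl {n} (u v : vec n) : 'F_2 :=
  \sum_(i < n) (u 0 (lshift n i) * v 0 (rshift n i) + v 0 (lshift n i) * u 0 (rshift n i)).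

Definition act {n} (C : 'M['F_2]_(n + n)) (v : vec n) : vec n := (C *m v^T)^T.

(* the index "1" (0-based 0) of 'I_n, built from any inhabitant *)
Definition ord0_of {n} (k : 'I_n) : 'I_n :=
  Ordinal (leq_ltn_trans (leq0n k) (ltn_ord k)).

Definition swapi {m} (a b j : 'I_m) : 'I_m :=
  if j == a then b else if j == b then a else j.

Definition first_k {n} (r : vec n) : option 'I_n :=
  [pick k : 'I_n | (r 0 (rshift n k) == 1) &&
     [forall j : 'I_n, (j < k)%N ==> (r 0 (rshift n j) == 0)]].

Definition mx_of_cols {n} (img : 'I_(n + n) -> vec n) : 'M['F_2]_(n + n) :=
  \matrix_(i, j) img j 0 i.

(* the ensemble R_n: C as a function of the sample r *)
Definition Cmat {n} (r : vec n) : 'M['F_2]_(n + n) :=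
  match first_k r with
  | None => 1%:M
  | Some k =>
      let z := ord0_of k in
      let r' : vec n := \row_j r 0 (swapi (rshift n z) (rshift n k) j) in
      let C0 := mx_of_cols (fun j =>
        if j == lshift n z then e_ z
        else if j == rshift n z then r'
        else delta_mx 0 j + sympl r' (delta_mx 0 j) *: e_ z) in
      let Pi := mx_of_cols (fun j =>
        delta_mx 0 (swapi (rshift n z) (rshift n k)
                      (swapi (lshift n z) (lshift n k) j))) in
      Pi *m C0
  end.

(* subspaces of Z_2^{2n} are represented by their sets of vectors *)
Definition span_set {m n} (B : 'M['F_2]_(m, n + n)) : {set vec n} :=
  [set v : vec n | (v <= B)%MS].

(* ordered bases of size n-1 of V (rows of the matrix = basis vectors) *)
Definition bases {n} (V : {set vec n}) : {set 'M['F_2]_(n.-1, n + n)} :=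
  [set B | row_free B && (span_set B == V)].

Definition isotropic {n} (V : {set vec n}) : bool :=
  [forall u in V, forall v in V, sympl u v == 0].

(* (n-1)-dimensional isotropic subspaces *)
Definition iso_subspaces n : {set {set vec n}} :=
  [set V : {set vec n} | (bases V != set0) && isotropic V].

Definition iso_subspaces_f1 n : {set {set vec n}} :=
  [set V in iso_subspaces n |
     [forall z : 'I_n, (val z == 0%N) ==> [forall v in V, sympl v (f_ z) == 0]]].

Definition act_rows {n} (C : 'M['F_2]_(n + n)) (B : 'M['F_2]_(n.-1, n + n))
  : 'M['F_2]_(n.-1, n + n) := \matrix_i act C (row i B).

Definition src_dist n (W : 'M['F_2]_(n.-1, n + n)) : rat :=
  \sum_(r : vec n) \sum_(V in iso_subspaces_f1 n) \sum_(B in bases V)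
    (act_rows (Cmat r) B == W)%:R /
    (#|{: vec n}|%:R * #|iso_subspaces_f1 n|%:R * #|bases V|%:R).

Definition tgt_dist n (W : 'M['F_2]_(n.-1, n + n)) : rat :=
  \sum_(V in iso_subspaces n) \sum_(B in bases V)
    (B == W)%:R / (#|iso_subspaces n|%:R * #|bases V|%:R).

Definition tv_dist {T : finType} (p q : T -> rat) : rat :=
  2^-1 * \sum_(x : T) `|p x - q x|.

Definition negligible (eps : nat -> rat) : Prop :=
  forall c : nat, exists N : nat, forall n : nat, (N <= n)%N ->
    eps n <= ((n%:R : rat) ^+ c)^-1.

(* Main.v *)
Require Import Defs.
From HB Require Import structures.
From mathcomp Require Import all_boot all_order all_algebra.
From mathcomp Require Import zify ring lra.
Import Order.TTheory GRing.Theory Num.Theory.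
Local Open Scope ring_scope.
Set Implicit Arguments. Unset Strict Implicit. Unset Printing Implicit Defensive.

Lemma F2_addxx (x : 'F_2) : x + x = 0.
Proof. by case: x => [[|[|m]] //= Hm]; apply/val_inj. Qed.

Section Sym.
Variable n : nat.
Implicit Types (u v w : vec n).

Definition pt (j : 'I_(n+n)) : 'I_(n+n) :=
  match split j with inl i => rshift n i | inr i => lshift n i end.
Lemma pt_l i : pt (lshift n i) = rshift n i.
Proof. by rewrite /pt (unsplitK (inl _ i)). Qed.
Lemma pt_r i : pt (rshift n i) = lshift n i.
Proof. by rewrite /pt (unsplitK (inr _ i)). Qed.
Lemma ordLR (j : 'I_(n+n)) : {i | j = lshift n i} + {i | j = rshift n i}.
Proof. case: (split_ordP j) => i ->; [apply: inl|apply: inr]; exists i => //. Qed.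
Lemma ptK : involutive pt.
Proof. move=> j; case: (ordLR j) => -[i ->]; [rewrite pt_l pt_r //| rewrite pt_r pt_l //]. Qed.

Lemma sympl_dot u v : sympl u v = \sum_j u 0 j * v 0 (pt j).
Proof.
rewrite /sympl big_split_ord /= big_split /=; congr (_ + _);
  apply: eq_bigr => i _; [by rewrite pt_l | by rewrite pt_r mulrC].
Qed.
Lemma sympl_sym u v : sympl u v = sympl v u.
Proof. by rewrite /sympl; apply: eq_bigr => i _; rewrite addrC. Qed.
Lemma sympl_suml (I : finType) (c : I -> 'F_2) (x : I -> vec n) v :
  sympl (\sum_i c i *: x i) v = \sum_i c i * sympl (x i) v.
Proof.
rewrite sympl_dot; under eq_bigr do rewrite summxE mulr_suml.
rewrite exchange_big; apply: eq_bigr => i _; rewrite sympl_dot mulr_sumr.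
by apply: eq_bigr => j _; rewrite !mxE mulrA.
Qed.
Lemma sympl_sumr (I : finType) (c : I -> 'F_2) (x : I -> vec n) v :
  sympl v (\sum_i c i *: x i) = \sum_i c i * sympl v (x i).
Proof. by rewrite sympl_sym sympl_suml; under eq_bigr do rewrite sympl_sym. Qed.
Lemma sympl_addl u u' v : sympl (u + u') v = sympl u v + sympl u' v.
Proof.
rewrite !sympl_dot -big_split; apply: eq_bigr => j _; by rewrite !mxE mulrDl.
Qed.
Lemma sympl_scalel a u v : sympl (a *: u) v = a * sympl u v.
Proof.
rewrite !sympl_dot mulr_sumr; apply: eq_bigr => j _; by rewrite !mxE mulrA.
Qed.
Lemma sympl_addr u u' v : sympl v (u + u') = sympl v u + sympl v u'.
Proof. by rewrite sympl_sym sympl_addl !(sympl_sym v). Qed.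
Lemma sympl_scaler a u v : sympl v (a *: u) = a * sympl v u.
Proof. by rewrite sympl_sym sympl_scalel sympl_sym. Qed.
Lemma sympl_delta u j : sympl u (delta_mx 0 j) = u 0 (pt j).
Proof.
rewrite sympl_dot (bigD1 (pt j)) //= big1 => [|k hk]; rewrite !mxE.
  by rewrite ptK !eqxx mulr1 addr0.
suff -> : (pt k == j) = false by rewrite andbF mulr0.
by apply/negbTE; apply: contra hk => /eqP <-; rewrite ptK.
Qed.
Lemma sympl_uu u : sympl u u = 0.
Proof. by rewrite /sympl big1 // => i _; rewrite [_ * u 0 (rshift n i)]mulrC F2_addxx. Qed.
Lemma sympl0l v : sympl 0 v = 0.
Proof. by rewrite sympl_dot big1 // => j _; rewrite mxE mul0r. Qed.

Lemma act_mul (C : 'M['F_2]_(n+n)) v : act C v = v *m C^T.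
Proof. by rewrite /act trmx_mul trmxK. Qed.

End Sym.

Lemma swapiK m (a b : 'I_m) : involutive (swapi a b).
Proof.
move=> j; rewrite /swapi.
case: (eqVneq j a) => [->|ja].
  by rewrite eqxx; case: (eqVneq b a) => [->|ba]; rewrite ?eqxx // (negbTE ba) eqxx.
case: (eqVneq j b) ja => [->|jb] ja; first by rewrite eqxx.
by rewrite (negbTE ja) (negbTE jb).
Qed.

Section Cm.
Variable n : nat.
Implicit Types (u v w : vec n).

Lemma swapi_ll (a b i : 'I_n) : swapi (lshift n a) (lshift n b) (lshift n i) = lshift n (swapi a b i).
Proof. by rewrite /swapi !(@eq_lshift n n); case: (i == a); case: (i == b). Qed.
Lemma swapi_rr (a b i : 'I_n) : swapi (rshift n a) (rshift n b) (rshift n i) = rshift n (swapi a b i).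
Proof. by rewrite /swapi !(@eq_rshift n n); case: (i == a); case: (i == b). Qed.
Lemma swapi_rl (a b i : 'I_n) : swapi (rshift n a) (rshift n b) (lshift n i) = lshift n i.
Proof. by rewrite /swapi !(@eq_lrshift n n). Qed.
Lemma swapi_lr (a b i : 'I_n) : swapi (lshift n a) (lshift n b) (rshift n i) = rshift n i.
Proof. by rewrite /swapi ![rshift _ _ == _]eq_sym !(@eq_lrshift n n). Qed.

Lemma act_cols (img : 'I_(n+n) -> vec n) v : act (mx_of_cols img) v = \sum_j v 0 j *: img j.
Proof. apply/rowP => i; rewrite !mxE summxE; apply: eq_bigr => j _; by rewrite !mxE mulrC. Qed.

Lemma deltaE (j c : 'I_(n+n)) : (delta_mx 0 j : vec n) 0 c = (c == j)%:R.
Proof. by rewrite mxE eqxx. Qed.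

Lemma act_cols_delta (img : 'I_(n+n) -> vec n) j : act (mx_of_cols img) (delta_mx 0 j) = img j.
Proof.
rewrite act_cols (bigD1 j) //= big1 => [|k hk]; first by rewrite deltaE eqxx scale1r addr0.
by rewrite deltaE (negbTE hk) scale0r.
Qed.

Lemma act_mulmx (A B : 'M['F_2]_(n+n)) v : act (A *m B) v = act A (act B v).
Proof. by rewrite /act trmxK mulmxA. Qed.

Lemma act1 v : act 1%:M v = v.
Proof. by rewrite /act mul1mx trmxK. Qed.

Lemma sym_cols img : (forall j k, sympl (img j) (img k) = sympl (delta_mx 0 j) (delta_mx 0 k)) ->
  forall v w, sympl (act (mx_of_cols img) v) (act (mx_of_cols img) w) = sympl v w.
Proof.
move=> H v w; rewrite !act_cols [in RHS](row_sum_delta v) [in RHS](row_sum_delta w) !sympl_suml.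
apply: eq_bigr => j _; rewrite !sympl_sumr; congr (_ * _); apply: eq_bigr => k _; by rewrite H.
Qed.

Lemma act_perm (s : 'I_(n+n) -> 'I_(n+n)) : involutive s -> forall v,
  act (mx_of_cols (fun j => delta_mx 0 (s j))) v = \row_i v 0 (s i).
Proof.
move=> sK v; rewrite act_cols; apply/rowP => i; rewrite summxE mxE (bigD1 (s i)) //= big1 => [|j hj].
  by rewrite !mxE sK !eqxx mulr1 addr0.
rewrite !mxE; suff -> : (i == s j) = false by rewrite andbF mulr0.
by apply/negbTE; apply: contra hj => /eqP ->; rewrite sK.
Qed.

Lemma sympl_perm (s : 'I_(n+n) -> 'I_(n+n)) (t : 'I_n -> 'I_n) : injective t ->
  (forall i, s (lshift n i) = lshift n (t i)) -> (forall i, s (rshift n i) = rshift n (t i)) ->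
  forall v w, sympl (\row_i v 0 (s i)) (\row_i w 0 (s i)) = sympl v w.
Proof.
move=> tI hl hr v w; rewrite /sympl [RHS](reindex_inj tI). apply: eq_bigr => i _; by rewrite !mxE hl hr.
Qed.

Lemma sympl_er u (z : 'I_n) : sympl u (e_ z) = u 0 (rshift n z).
Proof. by rewrite /e_ sympl_delta pt_l. Qed.
Lemma sympl_el u (z : 'I_n) : sympl (e_ z) u = u 0 (rshift n z).
Proof. by rewrite sympl_sym sympl_er. Qed.
Lemma sympl_dd (j k : 'I_(n+n)) : sympl (delta_mx 0 j : vec n) (delta_mx 0 k) = (pt j == k)%:R.
Proof. by rewrite sympl_delta deltaE (can2_eq (@ptK n) (@ptK n)) eq_sym. Qed.

Lemma C0_sym (z : 'I_n) (r' : vec n) : r' 0 (rshift n z) = 1 ->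
  forall j k : 'I_(n+n), sympl ((fun j => if j == lshift n z then e_ z else if j == rshift n z then r'
        else delta_mx 0 j + sympl r' (delta_mx 0 j) *: e_ z) j)
      ((fun j => if j == lshift n z then e_ z else if j == rshift n z then r'
        else delta_mx 0 j + sympl r' (delta_mx 0 j) *: e_ z) k) = sympl (delta_mx 0 j) (delta_mx 0 k).
Proof.
move=> h1 j k /=; rewrite sympl_dd.
have ptL : pt (lshift n z) = rshift n z by rewrite pt_l.
have ptR : pt (rshift n z) = lshift n z by rewrite pt_r.
have LR : (lshift n z == rshift n z) = false by rewrite eq_lrshift.
have RL : (rshift n z == lshift n z) = false by rewrite eq_sym eq_lrshift.
have RR : (rshift n z == rshift n z) = true by rewrite eqxx.
have LL : (lshift n z == lshift n z) = true by rewrite eqxx.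
case: (eqVneq j (lshift n z)) => [->|hj]; case: (eqVneq k (lshift n z)) => [->|hk];
 rewrite ?ptL ?RL ?LR.
- by rewrite sympl_uu.
- case: (eqVneq k (rshift n z)) => [hk2|hk2]; [subst k; by rewrite sympl_el h1|].
  rewrite sympl_addr sympl_scaler !sympl_el /e_ !deltaE RL eq_sym (negbTE hk2).
  by rewrite mulr0 addr0.
- case: (eqVneq j (rshift n z)) => [hj2|hj2]; [subst j; by rewrite ptR sympl_er h1 eqxx|].
  rewrite sympl_addl sympl_scalel !sympl_er /e_ !deltaE RL eq_sym (negbTE hj2) mulr0 addr0.
  by rewrite (can2_eq (@ptK n) (@ptK n)) pt_l (negbTE hj2).
- case: (eqVneq j (rshift n z)) => [hj2|hj2]; [subst j|];
  case: (eqVneq k (rshift n z)) => [hk2|hk2]; [subst k| |subst k|].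
  + by rewrite sympl_uu ptR LR.
  + rewrite sympl_addr sympl_scaler sympl_er h1 mulr1 F2_addxx.
    by rewrite ptR eq_sym (negbTE hk).
  + rewrite sympl_addl sympl_scalel sympl_el h1 mulr1 sympl_sym F2_addxx.
    by rewrite (can2_eq (@ptK n) (@ptK n)) ptR (negbTE hj).
  + rewrite sympl_addl !sympl_addr !sympl_scalel !sympl_scaler.
    rewrite sympl_uu !sympl_er !sympl_el /e_ !deltaE ![rshift n z == _]eq_sym (negbTE hj2) (negbTE hk2).
    by rewrite !mulr0 !addr0 sympl_dd.
Qed.

End Cm.

Lemma F2_cases (x : 'F_2) : x = 0 \/ x = 1.
Proof. by case: x => [[|[|m]] //= Hm]; [left|right]; apply/val_inj. Qed.

Lemma swapi_a m (a b : 'I_m) : swapi a b a = b.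
Proof. by rewrite /swapi eqxx. Qed.

Section Cmat.
Variable n : nat.

Lemma first_kP (r : vec n) k : first_k r = Some k ->
  r 0 (rshift n k) = 1 /\ (forall j : 'I_n, (j < k)%N -> r 0 (rshift n j) = 0).
Proof.
rewrite /first_k; case: pickP => // x /andP[/eqP h1 /forallP h2] [<-]; split => // j hj.
by apply/eqP; move: (h2 j); rewrite hj.
Qed.

Lemma first_k_None (r : vec n) : first_k r = None -> forall j, r 0 (rshift n j) = 0.
Proof.
move=> E j; case: (F2_cases (r 0 (rshift n j))) => // hj.
have hP : (fun i : 'I_n => r 0 (rshift n i) == 1) j by rewrite /= hj.
case: (@arg_minnP _ j (fun i : 'I_n => r 0 (rshift n i) == 1) (fun i : 'I_n => val i) hP) => m /eqP hm hmin.
move: E; rewrite /first_k; case: pickP => // /(_ m); rewrite hm eqxx /=.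
move/negbT/forallPn => -[i]; rewrite negb_imply => /andP[him].
move=> hi; have hi1 : r 0 (rshift n i) == 1 by case: (F2_cases (r 0 (rshift n i))) hi => ->.
by have := hmin i hi1; rewrite leqNgt him.
Qed.

Definition sigma (z k : 'I_n) (j : 'I_(n+n)) :=
  swapi (rshift n z) (rshift n k) (swapi (lshift n z) (lshift n k) j).

Lemma sigma_l z k i : sigma z k (lshift n i) = lshift n (swapi z k i).
Proof. by rewrite /sigma swapi_ll swapi_rl. Qed.
Lemma sigma_r z k i : sigma z k (rshift n i) = rshift n (swapi z k i).
Proof. by rewrite /sigma swapi_lr swapi_rr. Qed.
Lemma sigmaK z k : involutive (sigma z k).
Proof.
move=> j; case: (ordLR j) => -[i ->]; [by rewrite !sigma_l swapiK | by rewrite !sigma_r swapiK].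
Qed.

Lemma Cmat_symp (r : vec n) v w : sympl (act (Cmat r) v) (act (Cmat r) w) = sympl v w.
Proof.
rewrite /Cmat; case E: (first_k r) => [k|]; last by rewrite !act1.
have [h1 _] := first_kP E.
rewrite !act_mulmx !(act_perm (sigmaK (ord0_of k) k)).
rewrite (sympl_perm (t := swapi (ord0_of k) k)); [| exact: (can_inj (swapiK _ _)) | exact: sigma_l | exact: sigma_r].
apply: sym_cols; apply: C0_sym.
by rewrite mxE swapi_a.
Qed.

Definition hmap (r : vec n) : vec n :=
  match first_k r with
  | Some k => \row_i r 0 (swapi (lshift n (ord0_of k)) (lshift n k) i)
  | None => r end.

Lemma Cmat_f1 r k : first_k r = Some k -> act (Cmat r) (f_ (ord0_of k)) = hmap r.
Proof.
move=> E; rewrite /Cmat /hmap E act_mulmx (act_perm (sigmaK _ _)) /f_ act_cols_delta.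
rewrite eq_sym eq_lrshift eqxx.
by apply/rowP => i; rewrite !mxE /sigma swapiK.
Qed.

Lemma first_k_eq (r r' : vec n) : (forall j, r 0 (rshift n j) = r' 0 (rshift n j)) ->
  first_k r = first_k r'.
Proof.
move=> H; rewrite /first_k; apply: eq_pick => k /=; rewrite H; congr (_ && _).
by apply: eq_forallb => j; rewrite H.
Qed.

Lemma first_k_hmap r : first_k (hmap r) = first_k r.
Proof.
rewrite /hmap; case E: (first_k r) => [k|] //; rewrite -E.
by apply: first_k_eq => j; rewrite mxE swapi_lr.
Qed.

Lemma hmapK : involutive hmap.
Proof.
move=> r; rewrite {1}/hmap first_k_hmap /hmap; case E: (first_k r) => [k|] //.
by apply/rowP => i; rewrite !mxE swapiK.
Qed.

Lemma Cmat_None (r : vec n) : first_k r = None -> Cmat r = 1%:M.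
Proof. by rewrite /Cmat => ->. Qed.

End Cmat.

Section Inv.
Variable n : nat.
Implicit Types (u v w x : vec n).

Definition symM (M : 'M['F_2]_(n+n)) := forall u v : vec n, sympl (u *m M) (v *m M) = sympl u v.

Lemma symM_Cmat (r : vec n) : symM (Cmat r)^T.
Proof. by move=> u v; rewrite -!act_mul Cmat_symp. Qed.

Lemma symM_mul A B : symM A -> symM B -> symM (A *m B).
Proof. by move=> hA hB u v; rewrite !mulmxA hB hA. Qed.

Lemma sympl_nondeg u : (forall v, sympl u v = 0) -> u = 0.
Proof.
move=> H; apply/rowP => j; rewrite mxE -(ptK j) -sympl_delta; exact: H.
Qed.

Lemma symM_unit M : symM M -> M \in unitmx.
Proof.
move=> hM; rewrite -row_free_unit -kermx_eq0; apply/rowV0P => v /sub_kermxP hv.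
by apply: sympl_nondeg => w; rewrite -hM hv sympl0l.
Qed.

Lemma rowfree_unit m (X : 'M['F_2]_(m, n+n)) M : M \in unitmx -> row_free (X *m M) = row_free X.
Proof. by move=> uM; rewrite /row_free mxrankMfree // row_free_unit. Qed.

Lemma span_eq m1 m2 (A : 'M['F_2]_(m1, n+n)) (B : 'M['F_2]_(m2, n+n)) :
  (span_set A == span_set B) = (A == B)%MS.
Proof.
apply/eqP/andP => [H | [hAB hBA]].
  split; apply/row_subP => i.
    have : row i A \in span_set A by rewrite inE row_sub.
    by rewrite H inE.
  have : row i B \in span_set B by rewrite inE row_sub.
  by rewrite -H inE.
apply/setP => v; rewrite !inE; apply/idP/idP => h; [exact: submx_trans hAB | exact: submx_trans hBA].
Qed.

Lemma isoP m (X : 'M['F_2]_(m, n+n)) :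
  reflect (forall u v, (u <= X)%MS -> (v <= X)%MS -> sympl u v = 0) (isotropic (span_set X)).
Proof.
apply: (iffP forallP) => [H u v hu hv | H u].
  by have := H u; rewrite inE hu /= => /forallP/(_ v); rewrite inE hv => /eqP.
by apply/implyP; rewrite inE => hu; apply/forallP => v; apply/implyP; rewrite inE => hv; rewrite H.
Qed.

Definition orth m (X : 'M['F_2]_(m, n+n)) x := [forall v in span_set X, sympl v x == 0].

Lemma orthP m (X : 'M['F_2]_(m, n+n)) x :
  reflect (forall u, (u <= X)%MS -> sympl u x = 0) (orth X x).
Proof.
apply: (iffP forallP) => [H u hu | H u].
  by have := H u; rewrite inE hu => /eqP.
by apply/implyP; rewrite inE => hu; rewrite H.
Qed.

Lemma iso_inv m (X : 'M['F_2]_(m, n+n)) M : symM M ->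
  isotropic (span_set (X *m M)) = isotropic (span_set X).
Proof.
move=> hM; apply/isoP/isoP => H u v hu hv.
  by rewrite -hM; apply: H; apply: submxMr.
case/submxP: hu => a ->; case/submxP: hv => b ->.
by rewrite !mulmxA hM; apply: H; apply: submxMl.
Qed.

Lemma orth_inv m (X : 'M['F_2]_(m, n+n)) M x : symM M ->
  orth (X *m M) (x *m M) = orth X x.
Proof.
move=> hM; apply/orthP/orthP => H u hu.
  by rewrite -hM; apply: H; apply: submxMr.
case/submxP: hu => a ->.
by rewrite mulmxA hM; apply: H; apply: submxMl.
Qed.

Definition beta m (X : 'M['F_2]_(m, n+n)) := #|bases (span_set X)|.

Lemma eqmxMunit m1 m2 (A : 'M['F_2]_(m1, n+n)) (B : 'M['F_2]_(m2, n+n)) M :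
  M \in unitmx -> (A *m M == B *m M)%MS = (A == B)%MS.
Proof. by move=> uM; rewrite !submxMfree // row_free_unit. Qed.

Lemma beta_inv (X : 'M['F_2]_(n.-1, n+n)) M : M \in unitmx -> beta (X *m M) = beta X.
Proof.
move=> uM; rewrite /beta -[RHS](card_imset _ (can_inj (mulmxK uM))).
apply: eq_card => Y; apply/idP/imsetP => [| [Y0 hY0 ->]].
  rewrite inE => /andP[h1 h2].
  exists (Y *m invmx M); last by rewrite mulmxKV.
  rewrite inE rowfree_unit ?unitmx_inv // h1 /= span_eq.
  by rewrite -(eqmxMunit _ _ uM) mulmxKV // -span_eq.
move: hY0; rewrite !inE => /andP[h1 h2]; rewrite rowfree_unit // h1 /= !span_eq.
by rewrite eqmxMunit // -span_eq.
Qed.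

End Inv.

Section Dist.
Variable n : nat.
Variable z0 : 'I_n.
Hypothesis hz0 : val z0 = 0%N.
Local Notation f1 := (f_ z0).
Local Notation Mx := 'M['F_2]_(n.-1, n+n).

Definition goodB (X : Mx) := row_free X && isotropic (span_set X).

Lemma inS (X : Mx) : row_free X -> (span_set X \in iso_subspaces n) = isotropic (span_set X).
Proof.
move=> rf; rewrite inE.
have -> // : bases (span_set X) != set0 by apply/set0Pn; exists X; rewrite inE rf /=.
Qed.

Lemma inS1 (X : Mx) : row_free X ->
  (span_set X \in iso_subspaces_f1 n) = isotropic (span_set X) && orth X f1.
Proof.
move=> rf; rewrite [_ \in iso_subspaces_f1 n]inE inS //; congr (_ && _).
apply/forallP/orthP => [H u hu | H z].
  by have := H z0; rewrite hz0 eqxx /= => /forallP/(_ u); rewrite inE hu => /eqP.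
apply/implyP => /eqP hz; have -> : z = z0 by apply/val_inj; rewrite /= hz hz0.
by apply/forallP => v; apply/implyP; rewrite inE => hv; rewrite H.
Qed.

Lemma part (SS : {set {set vec n}}) (psi : Mx -> rat) :
  \sum_(V in SS) \sum_(B in bases V) psi B =
  \sum_B (row_free B && (span_set B \in SS))%:R * psi B.
Proof.
under eq_bigr do rewrite big_mkcond /=.
rewrite exchange_big /=; apply: eq_bigr => B _.
case rf: (row_free B) => /=; last first.
  by rewrite mul0r big1 // => V _; rewrite inE rf.
under eq_bigr do rewrite inE rf /=.
rewrite -big_mkcondr /=.
case hS: (span_set B \in SS).
  rewrite (big_pred1 (span_set B)) ?mul1r // => V /=.
  case: (eqVneq V (span_set B)) => [->|hV]; first by rewrite hS.
  by rewrite andbF.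
by rewrite mul0r big1 // => V /andP[hV /eqP hB]; move: hV; rewrite -hB hS.
Qed.

Lemma act_rowsE (C : 'M['F_2]_(n+n)) (B : Mx) : act_rows C B = B *m C^T.
Proof. by apply/row_matrixP => i; rewrite rowK row_mul act_mul. Qed.

Lemma sum_delta (W : Mx) (F : Mx -> rat) : \sum_B (B == W)%:R * F B = F W.
Proof.
rewrite (bigD1 W) //= eqxx mul1r big1 ?addr0 // => B /negbTE ->; by rewrite mul0r.
Qed.

Local Notation RR := (#|{: vec n}|%:R : rat).
Local Notation S1 := (#|iso_subspaces_f1 n|%:R : rat).
Local Notation S := (#|iso_subspaces n|%:R : rat).

Lemma good_inv (X : Mx) M : symM M ->
  (row_free X && (span_set X \in iso_subspaces_f1 n)) = goodB (X *m M) && orth (X *m M) (f1 *m M).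
Proof.
move=> hM; rewrite /goodB rowfree_unit ?symM_unit //.
case rf: (row_free X) => //=; by rewrite inS1 // iso_inv // orth_inv.
Qed.

Lemma src_eq (W : Mx) : @src_dist n W =
  \sum_r (goodB W && orth W (act (Cmat r) f1))%:R / (RR * S1 * (beta W)%:R).
Proof.
rewrite /src_dist; apply: eq_bigr => r _.
set M := (Cmat r)^T; have hM := symM_Cmat r; have uM := symM_unit hM.
transitivity (\sum_(V in iso_subspaces_f1 n) \sum_(B in bases V)
    (B *m M == W)%:R / (RR * S1 * (beta B)%:R)).
  apply: eq_bigr => V _; apply: eq_bigr => B; rewrite inE => /andP[_ /eqP hB].
  by rewrite act_rowsE /beta hB.
rewrite part (reindex_inj (can_inj (mulmxKV uM))) /=.
under eq_bigr do rewrite mulmxKV // mulrCA.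
rewrite sum_delta (good_inv _ hM) mulmxKV // beta_inv ?unitmx_inv // act_mul.
by [].
Qed.

Lemma tgt_eq (W : Mx) : @tgt_dist n W = (goodB W)%:R / (S * (beta W)%:R).
Proof.
rewrite /tgt_dist.
transitivity (\sum_(V in iso_subspaces n) \sum_(B in bases V) (B == W)%:R / (S * (beta B)%:R)).
  apply: eq_bigr => V _; apply: eq_bigr => B; rewrite inE => /andP[_ /eqP hB].
  by rewrite /beta hB.
rewrite part; under eq_bigr do rewrite mulrCA.
rewrite sum_delta /goodB; case rf: (row_free W) => /=; last by rewrite !mul0r.
by rewrite inS // mulr1.
Qed.

End Dist.

Lemma sum_ind (T : finType) (P : pred T) : \sum_x (P x)%:R = #|P|%:R :> rat.
Proof.
rewrite -sum1_card natr_sum [RHS]big_mkcond /=; apply: eq_bigr => x _; rewrite unfold_in; by case: (P x).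
Qed.

Lemma sum_eq1 (T : finType) (X : T) : \sum_W (X == W)%:R = 1 :> rat.
Proof. by rewrite (bigD1 X) //= eqxx big1 ?addr0 // => W; rewrite eq_sym => /negbTE ->. Qed.

Lemma card_submx k m (K : 'M['F_2]_(k, m)) : #|[pred y : 'rV_m | (y <= K)%MS]| = (2 ^ \rank K)%N.
Proof.
have rf := row_base_free K; case/row_freeP: rf => D hD.
transitivity #|[set x *m row_base K | x : 'rV_(\rank K)]|.
  apply: eq_card => y; rewrite inE; apply/idP/imsetP => [|[x _ ->]].
    by rewrite -(eq_row_base K) => /submxP[x ->]; exists x.
  by rewrite -(eq_row_base K) submxMl.
rewrite card_imset; first by rewrite card_mx card_Fp // mul1n.
apply: (can_inj (g := mulmx^~ D)) => x; by rewrite -mulmxA hD mulmx1.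
Qed.

Section Counts.
Variable n : nat.
Local Notation Mx := 'M['F_2]_(n.-1, n+n).

Definition Om : 'M['F_2]_(n+n) := \matrix_(i, j) (pt i == j)%:R.

Lemma mulOm (v : vec n) : v *m Om = \row_j v 0 (pt j).
Proof.
apply/rowP => j; rewrite !mxE (bigD1 (pt j)) //= big1 => [|i hi]; rewrite !mxE.
  by rewrite ptK eqxx mulr1 addr0.
suff -> : (pt i == j) = false by rewrite mulr0.
by apply/negbTE; apply: contra hi => /eqP <-; rewrite ptK.
Qed.

Lemma OmK : cancel (fun v : vec n => v *m Om) (fun v : vec n => v *m Om).
Proof. by move=> v; rewrite !mulOm; apply/rowP => j; rewrite !mxE ptK. Qed.

Lemma symM_Om : symM Om.
Proof.
move=> u v; rewrite !mulOm /sympl; apply: eq_bigr => i _; rewrite !mxE pt_l pt_r.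
by rewrite addrC mulrC [v 0 _ * _]mulrC.
Qed.

Lemma sympl_mx (u x : vec n) : sympl u x = (u *m (x *m Om)^T) 0 0.
Proof. by rewrite sympl_dot mulOm !mxE; apply: eq_bigr => j _; rewrite !mxE. Qed.

Lemma orth_ker m (W : 'M['F_2]_(m, n+n)) (x : vec n) : orth W x = (x *m Om <= kermx W^T)%MS.
Proof.
apply/orthP/sub_kermxP => [H | h u].
  have h0 : W *m (x *m Om)^T = 0.
    apply/matrixP => i j; rewrite (ord1 j) mxE.
    have -> : \sum_j0 W i j0 * (x *m Om)^T j0 0 = (row i W *m (x *m Om)^T) 0 0.
      by rewrite mxE; apply: eq_bigr => k _; rewrite !mxE.
    by rewrite -sympl_mx H ?row_sub // mxE.
  by rewrite -[x *m Om *m W^T]trmxK trmx_mul trmxK h0 trmx0.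
case/submxP => a ->; rewrite sympl_mx -mulmxA.
have -> : W *m (x *m Om)^T = 0 by rewrite -[W *m _]trmxK trmx_mul trmxK h trmx0.
by rewrite mulmx0 mxE.
Qed.

Lemma orth_count (W : Mx) : row_free W -> (0 < n)%N ->
  \sum_(r : vec n) (orth W r)%:R = (2 ^ n.+1)%:R :> rat.
Proof.
move=> rf n0; rewrite (reindex_inj (can_inj OmK)) /=.
under eq_bigr do rewrite orth_ker OmK.
rewrite (sum_ind (fun r : vec n => (r <= kermx W^T)%MS)).
rewrite (card_submx (kermx W^T)) mxrank_ker mxrank_tr (eqP rf).
congr ((2 ^ _)%:R); case: n n0 => // n' _ /=; lia.
Qed.

End Counts.

Section T.
Variable n : nat.
Variable z0 : 'I_n.
Hypothesis hz0 : val z0 = 0%N.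
Local Notation f1 := (f_ z0).
Local Notation Mx := 'M['F_2]_(n.-1, n+n).

Definition Tx (x : vec n) : rat := \sum_(W : Mx) (goodB W && orth W x)%:R / (beta W)%:R.

Lemma Tx_inv x M : symM M -> Tx (x *m M) = Tx x.
Proof.
move=> hM; have uM := symM_unit hM; rewrite /Tx (reindex_inj (can_inj (mulmxK uM))) /=.
by apply: eq_bigr => W _; rewrite /goodB rowfree_unit // iso_inv // orth_inv // beta_inv.
Qed.

Lemma bases_card (V : {set vec n}) : bases V != set0 ->
  \sum_(B in bases V) 1 / (beta B)%:R = 1 :> rat.
Proof.
move=> hb; transitivity (\sum_(B in bases V) 1 / (#|bases V|)%:R : rat).
  by apply: eq_bigr => B; rewrite inE => /andP[_ /eqP hB]; rewrite /beta hB.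
have h0 : (#|bases V|)%:R != 0 :> rat by rewrite pnatr_eq0 -lt0n card_gt0.
rewrite sumr_const div1r.
have -> : forall y : rat, y *+ #|bases V| = y * #|bases V|%:R by move=> y; rewrite mulr_natr.
by rewrite mulVf.
Qed.

Lemma Tx_f1 : Tx f1 = #|iso_subspaces_f1 n|%:R.
Proof.
transitivity (\sum_(V in iso_subspaces_f1 n) \sum_(B in bases V) 1 / (beta B)%:R : rat).
  rewrite part; apply: eq_bigr => W _; rewrite /goodB.
  case rf: (row_free W) => /=; last by rewrite !mul0r.
  by rewrite (inS1 hz0) // mul1r.
rewrite -sum1_card natr_sum; apply: eq_bigr => V; rewrite !inE => /andP[/andP[hb _] _].
exact: bases_card.
Qed.

Lemma ord0_ofE (k : 'I_n) : ord0_of k = z0.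
Proof. by apply/val_inj; rewrite /= hz0. Qed.

Lemma Tx_x x : x != 0 -> Tx x = #|iso_subspaces_f1 n|%:R.
Proof.
move=> x0; rewrite -Tx_f1.
have key : forall y : vec n, first_k y != None -> exists2 M, symM M & f1 *m M = y.
  move=> y; case E: (first_k y) => [k|] // _.
  exists (Cmat (hmap y))^T; first exact: symM_Cmat.
  have E' : first_k (hmap y) = Some k by rewrite first_k_hmap.
  by rewrite -act_mul -(ord0_ofE k) (Cmat_f1 E') hmapK.
case E: (first_k x) => [k|].
  have hx : first_k x != None by rewrite E.
  by have [M hM <-] := key x hx; rewrite Tx_inv.
have hy : first_k (x *m Om n) != None.
  apply/negP => /eqP /first_k_None hN; move/eqP: x0; apply; apply/rowP => j.
  case: (ordLR j) => -[i ->]; rewrite mxE.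
    by have := hN i; rewrite mulOm mxE pt_r.
  by rewrite (first_k_None E).
have [M hM hMy] := key _ hy.
rewrite -[x](OmK (n:=n)) -hMy -mulmxA Tx_inv //.
by apply: symM_mul => //; exact: symM_Om.
Qed.

Lemma first_k0 : first_k (0 : vec n) = None.
Proof. by rewrite /first_k; case: pickP => // k /andP[]; rewrite mxE. Qed.

Lemma bad_card : (#|[pred r : vec n | first_k r == None]| <= 2 ^ n)%N.
Proof.
pose f (r : vec n) : 'rV['F_2]_n := \row_i r 0 (lshift n i).
rewrite -(card_in_imset (f := f)); last first.
  move=> r r' /eqP hr /eqP hr' h; apply/rowP => j; case: (ordLR j) => -[i ->].
    by have := congr1 (fun v : 'rV['F_2]_n => v 0 i) h; rewrite !mxE.
  by rewrite (first_k_None hr) (first_k_None hr').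
apply: leq_trans (max_card _) _.
by rewrite card_mx card_Fp // mul1n.
Qed.

End T.

Lemma sumr_constR (T : finType) (A : pred T) (c : rat) : \sum_(i in A) c = #|A|%:R * c.
Proof. by rewrite sumr_const mulr_natl. Qed.

Lemma sumr_constT (T : finType) (c : rat) : \sum_(i : T) c = #|T|%:R * c.
Proof. by rewrite sumr_const mulr_natl. Qed.

Lemma natr_and (a b : bool) : (a && b)%:R = a%:R * b%:R :> rat.
Proof. by case: a; case: b; rewrite ?mul1r ?mul0r. Qed.

Lemma tv_trick (T : finType) (p q c : T -> rat) (mu : rat) :
  \sum_x p x = 1 -> \sum_x q x = 1 -> (forall x, 0 <= q x) -> (forall x, c x = mu * q x) ->
  \sum_x `|p x - q x| <= 2 * \sum_x `|p x - c x|.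
Proof.
move=> hp hq q0 hc.
have h1 : \sum_x `|p x - q x| <= \sum_x `|p x - c x| + \sum_x `|c x - q x|.
  by rewrite -big_split; apply: ler_sum => x _; apply: ler_distD.
have h2 : \sum_x `|c x - q x| = `|mu - 1|.
  transitivity (\sum_x `|mu - 1| * q x).
    by apply: eq_bigr => x _; rewrite hc -{2}[q x]mul1r -mulrBl normrM (ger0_norm (q0 x)).
  by rewrite -mulr_sumr hq mulr1.
have h3 : `|mu - 1| <= \sum_x `|p x - c x|.
  have -> : mu - 1 = \sum_x (c x - p x).
    by rewrite sumrB hp; under eq_bigr do rewrite hc; rewrite -mulr_sumr hq mulr1.
  apply: le_trans (ler_norm_sum _ _ _) _; apply: ler_sum => x _; by rewrite distrC.
lra.
Qed.

Section Main.
Variable n : nat.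
Variable z0 : 'I_n.
Hypothesis hz0 : val z0 = 0%N.
Hypothesis hS1 : (0 < #|iso_subspaces_f1 n|)%N.
Local Notation f1 := (f_ z0).
Local Notation Mx := 'M['F_2]_(n.-1, n+n).
Local Notation RR := (#|{: vec n}|%:R : rat).
Local Notation S1 := (#|iso_subspaces_f1 n|%:R : rat).
Local Notation S := (#|iso_subspaces n|%:R : rat).

Lemma n_gt0 : (0 < n)%N.
Proof. by case: n z0 => [[]|]. Qed.

Lemma RR_gt0 : 0 < RR.
Proof. by rewrite ltr0n; apply/card_gt0P; exists 0. Qed.
Lemma S1_gt0 : 0 < S1.
Proof. by rewrite ltr0n. Qed.

Lemma basesS (V : {set vec n}) : V \in iso_subspaces n -> (0 < #|bases V|)%N.
Proof. by rewrite inE card_gt0 => /andP[]. Qed.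
Lemma basesS1 (V : {set vec n}) : V \in iso_subspaces_f1 n -> (0 < #|bases V|)%N.
Proof. by rewrite inE => /andP[/basesS]. Qed.

Lemma S_gt0 : 0 < S.
Proof.
case/card_gt0P: hS1 => V hV; rewrite ltr0n; apply/card_gt0P; exists V.
by move: hV; rewrite inE => /andP[].
Qed.

Lemma src_sum1 : \sum_(W : Mx) @src_dist n W = 1.
Proof.
rewrite /src_dist exchange_big /=.
transitivity (\sum_(r : vec n) \sum_(V in iso_subspaces_f1 n) \sum_(B in bases V)
   1 / (RR * S1 * #|bases V|%:R)).
  apply: eq_bigr => r _; rewrite exchange_big; apply: eq_bigr => V _; rewrite exchange_big.
  by apply: eq_bigr => B _; rewrite -mulr_suml sum_eq1.
transitivity (\sum_(r : vec n) \sum_(V in iso_subspaces_f1 n) 1 / (RR * S1)).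
  apply: eq_bigr => r _; apply: eq_bigr => V hV; rewrite sumr_constR.
  have := basesS1 hV; rewrite -(ltr0n rat) => hb.
  have := RR_gt0; have := S1_gt0 => h1 h2.
  by field; apply/and3P; split; apply: lt0r_neq0.
rewrite sumr_constT sumr_constR.
have := RR_gt0; have := S1_gt0 => h1 h2.
by field; apply/andP; split; apply: lt0r_neq0.
Qed.

Lemma tgt_sum1 : \sum_(W : Mx) @tgt_dist n W = 1.
Proof.
rewrite /tgt_dist exchange_big /=.
transitivity (\sum_(V in iso_subspaces n) \sum_(B in bases V) 1 / (S * #|bases V|%:R)).
  apply: eq_bigr => V _; rewrite exchange_big.
  by apply: eq_bigr => B _; rewrite -mulr_suml sum_eq1.
transitivity (\sum_(V in iso_subspaces n) 1 / S).
  apply: eq_bigr => V hV; rewrite sumr_constR.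
  have := basesS hV; rewrite -(ltr0n rat) => hb.
  have := S_gt0 => h1.
  by field; apply/andP; split; apply: lt0r_neq0.
rewrite sumr_constR; have := S_gt0 => h1.
by field; apply: lt0r_neq0.
Qed.

Definition Nw (W : Mx) : rat := \sum_(r : vec n) (orth W (act (Cmat r) f1))%:R.
Definition Dw (W : Mx) : rat := \sum_(r : vec n | first_k r == None)
  ((orth W f1)%:R + (r != 0)%:R * (orth W r)%:R).

Lemma orth0 m (W : 'M_(m, n+n)) : orth W 0.
Proof. by apply/orthP => u _; rewrite sympl_sym sympl0l. Qed.

Lemma N_bound (W : Mx) : row_free W -> `|Nw W - ((2 ^ n.+1)%:R - 1)| <= Dw W.
Proof.
move=> rf.
pose P := fun r : vec n => first_k r == None.
have hN : Nw W = \sum_(r | P r) (orth W f1)%:R + \sum_(r | ~~ P r) (orth W r)%:R.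
  rewrite /Nw (bigID P) /=; congr (_ + _).
    by apply: eq_bigr => r /eqP E; rewrite Cmat_None // act1.
  rewrite [RHS](reindex_inj (can_inj (@hmapK n))) /=.
  apply: eq_big => [r|r]; first by rewrite /P first_k_hmap.
  rewrite /P; case E: (first_k r) => [k|] // _.
  by rewrite -(ord0_ofE hz0 k) (Cmat_f1 E).
have hK : \sum_(r | P r) (orth W r)%:R + \sum_(r | ~~ P r) (orth W r)%:R = (2 ^ n.+1)%:R :> rat.
  by rewrite -(orth_count rf n_gt0) [RHS](bigID P).
have h0 : \sum_(r | P r) ((r == 0)%:R : rat) = 1.
  rewrite (bigD1 0) /=; last by rewrite /P first_k0.
  by rewrite eqxx big1 ?addr0 // => r /andP[_ /negbTE ->].
have -> : Nw W - ((2 ^ n.+1)%:R - 1) =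
    \sum_(r | P r) ((orth W f1)%:R - (orth W r)%:R + (r == 0)%:R).
  rewrite big_split sumrB /= h0 -hK hN; ring.
apply: le_trans (ler_norm_sum _ _ _) _; apply: ler_sum => r _.
rewrite ler_norml; apply/andP.
case: (eqVneq r 0) => [->|r0]; rewrite ?orth0 /=; case: (orth W f1); rewrite /=; try lra;
  case: (orth W r); rewrite /=; lra.
Qed.

Lemma beta_pos (W : Mx) : row_free W -> (0 < beta W)%N.
Proof. by move=> rf; rewrite /beta card_gt0; apply/set0Pn; exists W; rewrite inE rf /=. Qed.

Lemma src_Nw (W : Mx) : @src_dist n W = (goodB W)%:R * Nw W / (RR * S1 * (beta W)%:R).
Proof.
rewrite (src_eq hz0) /Nw mulr_sumr mulr_suml; apply: eq_bigr => r _; by rewrite natr_and.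
Qed.

Definition kap : rat := ((2 ^ n.+1)%:R - 1) / (RR * S1).
Definition cW (W : Mx) : rat := (goodB W)%:R * kap / (beta W)%:R.

Lemma per_r (b : rat) (r : vec n) :
  \sum_(W : Mx) (goodB W)%:R * ((orth W f1)%:R + b * (orth W r)%:R) / (RR * S1 * (beta W)%:R)
  = (Tx f1 + b * Tx r) / (RR * S1).
Proof.
rewrite /Tx mulr_sumr -big_split mulr_suml; apply: eq_bigr => W _.
rewrite (natr_and (goodB W) (orth W f1)) (natr_and (goodB W) (orth W r)).
case g: (goodB W); first last.
  by rewrite /= !(mul0r, mulr0, add0r, addr0).
have rf : row_free W by move: g; rewrite /goodB => /andP[].
have := beta_pos rf; rewrite -(ltr0n rat) => hb.
have := RR_gt0; have := S1_gt0 => h1 h2.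
rewrite /=. by field; apply/and3P; split; apply: lt0r_neq0.
Qed.

Lemma main_bound : \sum_(W : Mx) `|@src_dist n W - cW W| <= 2 / (2 ^ n)%:R.
Proof.
apply: (@le_trans _ _ (\sum_(W : Mx) (goodB W)%:R * Dw W / (RR * S1 * (beta W)%:R))).
  apply: ler_sum => W _; case g: (goodB W).
    have rf : row_free W by move: g; rewrite /goodB => /andP[].
    have := beta_pos rf; rewrite -(ltr0n rat) => hb.
    have := RR_gt0; have := S1_gt0 => h1 h2.
    have hd : 0 < RR * S1 * (beta W)%:R by rewrite !mulr_gt0.
    have -> : @src_dist n W - cW W = (Nw W - ((2 ^ n.+1)%:R - 1)) / (RR * S1 * (beta W)%:R).
      rewrite (src_Nw W) /cW /kap g /=; by field; apply/and3P; split; apply: lt0r_neq0.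
    rewrite normrM normfV (gtr0_norm hd) mul1r; apply: ler_wpM2r; last exact: N_bound.
    by rewrite invr_ge0 ltW.
  by rewrite src_Nw /cW g !mul0r subrr normr0.
rewrite /Dw; under eq_bigr do rewrite mulr_sumr mulr_suml.
rewrite exchange_big /=.
apply: (@le_trans _ _ (\sum_(r : vec n | first_k r == None) 2 / RR)).
  apply: ler_sum => r _; rewrite per_r (Tx_f1 hz0).
  have := RR_gt0; have := S1_gt0 => h1 h2.
  case: (eqVneq r 0) => [->|r0].
    have -> : (S1 + false%:R * Tx (0 : vec n)) / (RR * S1) = 1 / RR.
      by rewrite /= mul0r addr0; field; apply/andP; split; apply: lt0r_neq0.
    by rewrite ler_pM2r ?invr_gt0 //; lra.
  rewrite (Tx_x hz0 r0).
  have -> : (S1 + true%:R * S1) / (RR * S1) = 2 / RR.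
    by rewrite /=; field; apply/andP; split; apply: lt0r_neq0.
  by [].
rewrite big_mkcond /=.
have -> : \sum_(r : vec n) (if first_k r == None then 2 / RR else 0) =
   \sum_(r : vec n) ((first_k r == None)%:R * (2 / RR)).
  by apply: eq_bigr => r _; case: (first_k r == None); rewrite ?mul1r ?mul0r.
rewrite -mulr_suml (sum_ind (fun r : vec n => first_k r == None)).
have hb := bad_card n; move: hb; rewrite -(ler_nat rat) => hb.
have -> : RR = (2 ^ n)%:R * (2 ^ n)%:R.
  by rewrite card_mx card_Fp // mul1n expnD natrM.
have h2 : 0 < (2 ^ n)%:R :> rat by rewrite ltr0n expn_gt0.
rewrite mulrA ler_pdivrMr ?mulr_gt0 //.
rewrite mulrA mulrAC divfK ?lt0r_neq0 //.
by rewrite mulrC ler_pM2l //; lra.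
Qed.

Lemma tv_bound : tv_dist (@src_dist n) (@tgt_dist n) <= 2 / (2 ^ n)%:R.
Proof.
rewrite /tv_dist.
have hq : forall W : Mx, 0 <= @tgt_dist n W.
  move=> W; rewrite (tgt_eq W); apply: divr_ge0 => //; apply: mulr_ge0 => //; exact: ltW S_gt0.
have hc : forall W : Mx, cW W = (kap * S) * @tgt_dist n W.
  move=> W; rewrite (tgt_eq W) /cW; case g: (goodB W); last by rewrite /= !(mul0r, mulr0).
  have rf : row_free W by move: g; rewrite /goodB => /andP[].
  have := beta_pos rf; rewrite -(ltr0n rat) => hb.
  have := S_gt0 => h1.
  rewrite /=; by field; apply/andP; split; apply: lt0r_neq0.
have H := @tv_trick _ (@src_dist n) (@tgt_dist n) cW (kap * S) src_sum1 tgt_sum1 hq hc.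
have := main_bound; lra.
Qed.

End Main.

Section Wit.
Variable m : nat.
Local Notation n := m.+2.

Definition B0 : 'M['F_2]_(n.-1, n + n) :=
  \matrix_(i, j) (j == lshift n (lift ord0 i))%:R.

Lemma B0_free : row_free B0.
Proof.
apply/row_freeP; exists B0^T; apply/matrixP => i i'; rewrite !mxE.
rewrite (bigD1 (lshift n (lift ord0 i))) //= big1 => [|j hj]; rewrite !mxE.
  by rewrite eqxx mul1r addr0 eq_sym eq_lshift (inj_eq (@lift_inj _ ord0)) eq_sym.
by rewrite (negbTE hj) mul0r.
Qed.

Lemma B0_entries (v : vec n) : (v <= B0)%MS ->
  (forall j, v 0 (rshift n j) = 0) /\ v 0 (lshift n ord0) = 0.
Proof.
case/submxP => a ->; split => [j|]; rewrite mxE big1 // => i _; rewrite !mxE.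
  by rewrite eq_sym eq_lrshift mulr0.
by rewrite eq_lshift (negbTE (neq_lift _ _)) mulr0.
Qed.

Lemma S1_nonempty : (0 < #|iso_subspaces_f1 n|)%N.
Proof.
apply/card_gt0P; exists (span_set B0).
have hz : val (ord0 : 'I_n) = 0%N by [].
rewrite (inS1 hz B0_free); apply/andP; split.
  apply/isoP => u v hu hv; rewrite /sympl big1 // => i _.
  by rewrite (proj1 (B0_entries hu)) (proj1 (B0_entries hv)) !mulr0 addr0.
apply/orthP => u hu; rewrite /f_ sympl_delta pt_r.
exact: (proj2 (B0_entries hu)).
Qed.

End Wit.

Lemma expn_mono c a b : (a <= b)%N -> (a ^ c <= b ^ c)%N.
Proof. by move=> h; elim: c => // c IH; rewrite !expnS leq_mul. Qed.

Lemma pow_bound c : exists N, forall n, (N <= n)%N -> (2 * n ^ c <= 2 ^ n)%N.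
Proof.
pose K := (2 * c.+1 ^ c)%N.
exists (K * c.+1)%N => n hn.
pose k := (n %/ c.+1)%N.
have hk1 : (k * c.+1 <= n)%N := leq_divM n c.+1.
have hk2 : (n < k.+1 * c.+1)%N := ltn_ceil n (ltn0Sn c).
have hK : (K <= k)%N by rewrite /k leq_divRL.
have e1 : (n ^ c <= (k.+1 * c.+1) ^ c)%N by apply: expn_mono; apply: ltnW.
have e2 : (k.+1 <= 2 ^ k)%N := ltn_expl k (ltnSn 1).
have e3 : (K <= 2 ^ k)%N.
  by apply: leq_trans (ltnW (ltn_expl K (ltnSn 1))) _; apply: leq_pexp2l.
apply: (leq_trans (leq_mul (leqnn 2) e1)).
have -> : (2 * (k.+1 * c.+1) ^ c = K * k.+1 ^ c)%N.
  by rewrite expnMn /K [(k.+1 ^ c * _)%N]mulnC mulnA.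
apply: leq_trans (leq_mul e3 (expn_mono c e2)) _.
rewrite -expnM -expnD; apply: leq_pexp2l => //.
by rewrite addnC -mulnSr.
Qed.

Lemma negl_eps : negligible (fun n => 2 / (2 ^ n)%:R).
Proof.
move=> c; have [N hN] := pow_bound c; exists (maxn N 1) => n.
rewrite geq_max => /andP[hNn hn1].
have h2 : 0 < (2 ^ n)%:R :> rat by rewrite ltr0n expn_gt0.
have hc : 0 < (n ^ c)%:R :> rat by rewrite ltr0n expn_gt0 hn1.
rewrite -natrX ler_pdivrMr // mulrC ler_pdivlMr //.
by rewrite -natrM ler_nat hN.
Qed.

Theorem lemma4p3 :
  (forall (n : nat), (2 <= n)%N -> forall (r v w : vec n),
      sympl (act (Cmat r) v) (act (Cmat r) w) = sympl v w) /\
  (exists eps : nat -> rat, negligible eps /\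
     forall (n : nat) (hn : (2 <= n)%N),
       tv_dist (@src_dist n) (@tgt_dist n)
         <= eps n).
Proof.
split.
  by move=> n _ r v w; exact: Cmat_symp.
exists (fun n => 2 / (2 ^ n)%:R); split; first exact: negl_eps.
move=> n; case: n => [|[|m]] // _.
exact: (@tv_bound m.+2 ord0 erefl (S1_nonempty m)).
Qed.
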